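(* Non-determinism of a KAT expression is witnessed by a finite interpretation: if $e\in\mathsf{KAT}(\Sigma,T)$ is not deterministic, then there exist a finite set $S$, $\tau:T\to2^S$ and $\sigma:\Sigma\to2^{S\times S}$ such that $\sigma(p)$ is the graph of a partial function for every $p\in\Sigma$ but $\mathcal{R}[\![e]\!]^\sigma_\tau$ is not the graph of a partial function.
   Context: For finite $T$ (tests), $\Sigma$ (actions): $\mathsf{BA}(T)$: $b::=\mathsf{false}\mid\mathsf{true}\mid t\in T\mid b\vee c\mid b\wedge c\mid\overline b$; $\mathsf{KAT}(\Sigma,T)$: $e::=b\mid p\in\Sigma\mid e+f\mid e\cdot f\mid e^*$. Relational semantics for a set $S$, $\tau:T\to2^S$, $\sigma:\Sigma\to2^{S\times S}$: tests denote subsets $[\![b]\!]_\tau$ (Boolean), $\mathcal{R}[\![b]\!]=\{\langle s,s\rangle:s\in[\![b]\!]_\tau\}$, $\mathcal{R}[\![p]\!]=\sigma(p)$, $\mathcal{R}[\![e+f]\!]=\mathcal{R}[\![e]\!]\cup\mathcal{R}[\![f]\!]$, $\mathcal{R}[\![ef]\!]=\mathcal{R}[\![e]\!]\circ\mathcal{R}[\![f]\!]$ (first $e$, then $f$), $\mathcal{R}[\![e^*]\!]$ is the reflexive-transitive closure of $\mathcal{R}[\![e]\!]$. $e$ is deterministic if for all (possibly infinite) $S$, $\tau$, $\sigma$ with each $\sigma(p)$ the graph of a partial function, $\mathcal{R}[\![e]\!]^\sigma_\tau$ is the graph of a partial function. *)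

(* Defs.v *)
From mathcomp Require Import all_boot.
From Stdlib Require Import Relations.Relation_Operators.
Set Implicit Arguments. Unset Strict Implicit. Unset Printing Implicit Defensive.

Inductive BA (T : finType) : Type :=
| BFalse | BTrue | BTest of T
| BOr of BA T & BA T | BAnd of BA T & BA T | BNot of BA T.

Inductive KAT (Sigma T : finType) : Type :=
| KTest of BA T
| KAct of Sigma
| KPlus of KAT Sigma T & KAT Sigma T
| KSeq of KAT Sigma T & KAT Sigma T
| KStar of KAT Sigma T.

Fixpoint BA_sem (T : finType) (S : Type) (tau : T -> S -> Prop) (b : BA T) : S -> Prop :=
  match b with
  | BFalse => fun _ => False
  | BTrue => fun _ => True
  | BTest t => tau t
  | BOr b c => fun s => BA_sem tau b s \/ BA_sem tau c s
  | BAnd b c => fun s => BA_sem tau b s /\ BA_sem tau c s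
  | BNot b => fun s => ~ BA_sem tau b s
  end.

Definition rcomp (S : Type) (r1 r2 : S -> S -> Prop) : S -> S -> Prop :=
  fun x z => exists y, r1 x y /\ r2 y z.

Fixpoint KAT_sem (Sigma T : finType) (S : Type) (tau : T -> S -> Prop)
  (sigma : Sigma -> S -> S -> Prop) (e : KAT Sigma T) : S -> S -> Prop :=
  match e with
  | KTest b => fun s s' => s = s' /\ BA_sem tau b s
  | KAct p => sigma p
  | KPlus e f => fun s s' => KAT_sem tau sigma e s s' \/ KAT_sem tau sigma f s s'
  | KSeq e f => rcomp (KAT_sem tau sigma e) (KAT_sem tau sigma f)
  | KStar e => clos_refl_trans S (KAT_sem tau sigma e)
  end.

Definition partial_fun (S : Type) (r : S -> S -> Prop) : Prop :=
  forall x y z, r x y -> r x z -> y = z.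

Definition deterministic (Sigma T : finType) (e : KAT Sigma T) : Prop :=
  forall (S : Type) (tau : T -> S -> Prop) (sigma : Sigma -> S -> S -> Prop),
    (forall p, partial_fun (sigma p)) -> partial_fun (KAT_sem tau sigma e).

(* Main.v *)
Require Import Defs.
From mathcomp Require Import all_boot.
From Stdlib Require Import Relations.Relation_Operators Classical List.
Set Implicit Arguments.
Unset Strict Implicit.

Section Pull.
Variables (Sigma T : finType) (S S' : Type) (tau : T -> S -> Prop)
  (sigma : Sigma -> S -> S -> Prop) (f : S' -> S).

Definition tauF (t : T) (i : S') := tau t (f i).
Definition sigmaF (p : Sigma) (i j : S') := sigma p (f i) (f j).

Lemma BA_pull (b : BA T) i : BA_sem tauF b i <-> BA_sem tau b (f i).
Proof.
elim: b => //= [b1 IH1 b2 IH2|b1 IH1 b2 IH2|b1 IH1]; tauto.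
Qed.

End Pull.

Lemma KAT_pull (Sigma T : finType) (S : Type) (tau : T -> S -> Prop)
  (sigma : Sigma -> S -> S -> Prop) (e : KAT Sigma T) a b :
  KAT_sem tau sigma e a b ->
  exists L : list S, forall (S' : Type) (f : S' -> S),
    (forall i j, f i = f j -> i = j) ->
    (forall s, In s L -> exists i, f i = s) ->
    forall i j, f i = a -> f j = b -> KAT_sem (tauF tau f) (sigmaF sigma f) e i j.
Proof.
elim: e a b.
- move=> t a b /= [Hab Hb]; exists nil => S' f Hinj _ i j Hi Hj.
  subst. have Hij := Hinj _ _ Hj; subst; split => //. by apply/BA_pull.
- move=> p a b /= H; exists nil => S' f Hinj _ i j Hi Hj; subst; exact H.
- move=> e1 IH1 e2 IH2 a b /= [H|H].
  + have [L HL] := IH1 _ _ H; exists L => S' f Hinj HC i j Hi Hj; left; exact: HL.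
  + have [L HL] := IH2 _ _ H; exists L => S' f Hinj HC i j Hi Hj; right; exact: HL.
- move=> e1 IH1 e2 IH2 a b /= [c [H1 H2]].
  have [L1 HL1] := IH1 _ _ H1; have [L2 HL2] := IH2 _ _ H2.
  exists (c :: L1 ++ L2) => S' f Hinj HC i j Hi Hj.
  have [k Hk] := HC c (or_introl erefl).
  exists k; split.
  + apply: HL1 => // s Hs; apply: HC; right; apply: in_or_app; left; exact Hs.
  + apply: HL2 => // s Hs; apply: HC; right; apply: in_or_app; right; exact Hs.
- move=> e1 IH1 a b /= H.
  elim: H => [x y Hxy|x|x y z _ IHa _ IHb].
  + have [L HL] := IH1 _ _ Hxy; exists L => S' f Hinj HC i j Hi Hj.
    apply: rt_step; exact: HL.
  + exists nil => S' f Hinj _ i j Hi Hj; subst; rewrite (Hinj _ _ Hj); exact: rt_refl.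
  + have [L1 HL1] := IHa; have [L2 HL2] := IHb.
    exists (y :: L1 ++ L2) => S' f Hinj HC i j Hi Hj.
    have [k Hk] := HC y (or_introl erefl).
    apply: (rt_trans _ _ _ k).
    * apply: HL1 => // s Hs; apply: HC; right; apply: in_or_app; left; exact Hs.
    * apply: HL2 => // s Hs; apply: HC; right; apply: in_or_app; right; exact Hs.
Qed.

Lemma fin_cover (S : Type) (L : list S) :
  exists (S' : finType) (f : S' -> S), (forall i j, f i = f j -> i = j) /\
    (forall s, In s L -> exists i, f i = s).
Proof.
elim: L => [|s L [S' [f [Hinj Hc]]]].
- exists void, (fun v : void => match v with end); split => [[]|s []].
- case: (classic (exists i, f i = s)) => [Hs|Hs].
  + exists S', f; split => // t [<-|Ht]; [exact Hs|exact: Hc].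
  + exists (option S'), (fun o => match o with Some i => f i | None => s end).
    split.
    * move=> [i|] [j|] //= H.
      -- by rewrite (Hinj _ _ H).
      -- by exfalso; apply: Hs; exists i.
      -- by exfalso; apply: Hs; exists j.
    * move=> t [<-|Ht]; first by exists None.
      have [i Hi] := Hc _ Ht; by exists (Some i).
Qed.

Theorem proposition4p5 (Sigma T : finType) (e : KAT Sigma T) :
  ~ deterministic e ->
  exists (S : finType) (tau : T -> S -> Prop) (sigma : Sigma -> S -> S -> Prop),
    (forall p, partial_fun (sigma p)) /\ ~ partial_fun (KAT_sem tau sigma e).
Proof.
move=> Hnd.
apply: NNPP => Hno; apply: Hnd => S tau sigma Hpf x y z Hy Hz.
apply: NNPP => Hyz.
have [L1 HL1] := KAT_pull Hy.
have [L2 HL2] := KAT_pull Hz.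
have [S' [g [Hinj Hc]]] := fin_cover (x :: y :: z :: L1 ++ L2).
have [i Hi] := Hc x ltac:(simpl; tauto).
have [j Hj] := Hc y ltac:(simpl; tauto).
have [k Hk] := Hc z ltac:(simpl; tauto).
have HC1 : forall s, In s L1 -> exists i, g i = s.
  move=> s Hs; apply: Hc; do 3 right; apply: in_or_app; by left.
have HC2 : forall s, In s L2 -> exists i, g i = s.
  move=> s Hs; apply: Hc; do 3 right; apply: in_or_app; by right.
apply: Hno; exists S', (tauF tau g), (sigmaF sigma g); split.
- move=> p a b c /= Hb Hc'; apply: Hinj; exact: Hpf Hb Hc'.
- move=> Hp; apply: Hyz; rewrite -Hj -Hk; congr g.
  apply: (Hp i); [exact: HL1|exact: HL2].
Qed.
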